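(* Let $m,k$ be positive integers and let $\mu_1,\dots,\mu_k\in\{0,1\}^m$ be random vectors whose entries are independent fair coin flips. Let $\beta=m/(k2^k)$. Then, with probability at least $1-2^{(1-\beta)k}$, the following non-degeneracy condition holds: whenever $\tau\in\{0,1\}^m$ has the property that for all $x,y,z\in\{1,\dots,m\}$ there exists some $i$ with $\tau(x)=\mu_i(x)$, $\tau(y)=\mu_i(y)$ and $\tau(z)=\mu_i(z)$, then $\tau=\mu_j$ for some $j\in\{1,\dots,k\}$. *)

(* Defs.v *)
From HB Require Import structures.
From mathcomp Require Import all_boot all_order all_algebra.
From mathcomp Require Import all_classical all_reals exp.
Set Implicit Arguments. Unset Strict Implicit. Unset Printing Implicit Defensive.
Import Order.TTheory GRing.Theory Num.Theory.

Definition config (m k : nat) := {ffun 'I_k -> {ffun 'I_m -> bool}}.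

Definition nondegenerate (m k : nat) (mu : config m k) : bool :=
  [forall tau : {ffun 'I_m -> bool},
     [forall x : 'I_m, forall y : 'I_m, forall z : 'I_m,
        exists i : 'I_k,
          [&& tau x == mu i x, tau y == mu i y & tau z == mu i z]]
     ==> [exists j : 'I_k, tau == mu j]].

(* Probability under independent fair coin flips = uniform distribution on
   configurations: proportion of good configurations. *)
Definition prob_nondeg (R : realType) (m k : nat) : R :=
  (#|[set mu : config m k | nondegenerate mu]|%:R / #|{: config m k}|%:R)%R.

(* Main.v *)
Require Import Defs.
From HB Require Import structures.
From mathcomp Require Import all_boot all_order all_algebra.
From mathcomp Require Import all_classical all_reals exp.
From mathcomp Require Import sequences ring lra.
Import Order.TTheory GRing.Theory Num.Theory.

Definition allpat (m k : nat) (mu : config m k) : bool :=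
  [forall v : {ffun 'I_k -> bool}, exists x : 'I_m, forall i : 'I_k, mu i x == v i].

Arguments allpat {m k}.

Lemma allpat_nondeg (m k : nat) (mu : config m k) : allpat mu -> Defs.nondegenerate mu.
Proof.
move=> /forallP AP.
have col : forall S : {set 'I_k}, exists x : 'I_m, forall i, mu i x = (i \in S).
  move=> S; case/existsP: (AP [ffun i => i \in S]) => x /forallP H.
  by exists x => i; move/eqP: (H i); rewrite ffunE.
apply/forallP => tau; apply/implyP => /forallP T.
have key : forall x y z, (forall i, [|| tau x != mu i x, tau y != mu i y | tau z != mu i z]) -> False.
  move=> x y z H; move: (T x) => /forallP/(_ y)/forallP/(_ z)/existsP[i /and3P[/eqP e1 /eqP e2 /eqP e3]].
  by have := H i; rewrite e1 e2 e3 !eqxx.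
pose P := fun S : {set 'I_k} => [exists x, [forall i, mu i x == (i \in S)] && tau x].
have PT : P [set: 'I_k].
  case: (col [set: 'I_k]) => x Hx; apply/existsP; exists x; apply/andP; split.
    by apply/forallP => i; rewrite Hx.
  case Ht: (tau x) => //; exfalso; apply: (key x x x) => i; by rewrite Ht Hx inE.
case: (arg_minnP (fun S : {set 'I_k} => #|S|) PT) => S /existsP[xS /andP[/forallP HS tS]] minS.
have HS' : forall i, mu i xS = (i \in S) by move=> i; apply/eqP.
case: (finset.set_0Vmem S) => [S0 | [i iS]].
  exfalso; apply: (key xS xS xS) => j; by rewrite tS HS' S0 inE.
have Si : S = [set i].
  apply/setP => j; rewrite inE; case: (eqVneq j i) => [-> // | ji].
  apply/negP => jS; exfalso.
  case: (col [set i]) => xi Hi; case: (col (S :\ i)) => xs Hs.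
  have ti : tau xi = false.
    case Ht: (tau xi) => //.
    have : (#|S| <= #|[set i]|)%N.
      apply: minS; apply/existsP; exists xi; rewrite Ht andbT; apply/forallP => l; by rewrite Hi.
    rewrite cards1 => /card_le1_eqP/(_ i j iS jS) /eqP; by rewrite (negbTE ji).
  have ts : tau xs = false.
    case Ht: (tau xs) => //.
    have : (#|S| <= #|S :\ i|)%N.
      apply: minS; apply/existsP; exists xs; rewrite Ht andbT; apply/forallP => l; by rewrite Hs.
    by rewrite (cardsD1 i S) iS ltnn.
  apply: (key xS xi xs) => l; rewrite tS ti ts HS' Hi Hs !inE.
  by case: (l \in S); case: (l == i).
apply/existsP; exists i; apply/eqP/ffunP => x.
have Hi : forall l, mu l xS = (l == i) by move=> l; rewrite HS' Si inE.
case: (boolP (tau x == mu i x)) => [/eqP // | ne]; exfalso.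
apply: (key x xS xS) => l; rewrite tS Hi.
case: (eqVneq l i) => [-> | _]; by rewrite ?ne ?orbT.
Qed.
Lemma count_bad (m k : nat) :
  (#|[set mu : config m k | ~~ allpat mu]| <= 2^k * (2^k).-1 ^ m)%N.
Proof.
pose tr := fun mu : config m k => [ffun x : 'I_m => [ffun i : 'I_k => mu i x]].
have tr_inj : injective tr.
  move=> mu1 mu2 e; apply/ffunP => i; apply/ffunP => x.
  by have := congr1 (fun w : {ffun 'I_m -> {ffun 'I_k -> bool}} => w x i) e; rewrite /tr !ffunE.
pose B (v : {ffun 'I_k -> bool}) := [set mu : config m k | [forall x, ~~ [forall i, mu i x == v i]]].
have sub : [set mu | ~~ allpat mu] \subset \bigcup_(v : {ffun 'I_k -> bool}) B v.
  apply/fintype.subsetP => mu; rewrite inE => /forallPn[v Hv]; apply/finset.bigcupP; exists v => //.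
  rewrite inE; apply/forallP => x; apply: contra Hv => H; by apply/existsP; exists x.
have cardB : forall v : {ffun 'I_k -> bool}, (#|B v| <= (2^k).-1 ^ m)%N.
  move=> v; rewrite -(card_imset _ tr_inj).
  have -> : (2^k).-1 ^ m = #|predC1 v| ^ #|'I_m|.
    by rewrite cardC1 card_ffun card_bool !card_ord.
  rewrite -(card_ffun_on 'I_m (predC1 v)).
  apply: subset_leq_card; apply/fintype.subsetP => w /finset.imsetP[mu]; rewrite inE => /forallP H ->.
  apply/ffun_onP => x; rewrite !inE; apply/negP => /eqP E; move/negP: (H x); apply.
  by apply/forallP => i; rewrite -E /tr !ffunE.
have U : (#|\bigcup_(v : {ffun 'I_k -> bool}) B v| <= \sum_(v : {ffun 'I_k -> bool}) #|B v|)%N.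
  elim/big_rec2: _ => [|v U n _ IH]; first by rewrite cards0.
  by rewrite cardsU; apply: leq_trans (leq_subr _ _) _; rewrite leq_add2l.
apply: leq_trans (subset_leq_card sub) _; apply: leq_trans U _.
apply: (@leq_trans (\sum_(v : {ffun 'I_k -> bool}) (2^k).-1 ^ m)); first by apply: leq_sum => v _; exact: cardB.
by rewrite sum_nat_const card_ffun card_bool card_ord.
Qed.
Local Open Scope ring_scope.
Lemma real_bound (R : realType) (m k : nat) (hk : (0 < k)%N) :
  ((2^k * (2^k).-1 ^ m)%:R / ((2^m)^k)%:R : R) <= powR 2 ((1 - m%:R / (k%:R * 2 ^+ k)) * k%:R).
Proof.
set q : R := 2 ^+ k.
have q1 : 1 <= q by rewrite /q exprn_ege1 // ler1n.
have q0 : 0 < q by apply: lt_le_trans q1.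
have -> : ((2^k * (2^k).-1 ^ m)%:R : R) = q * (q - 1) ^+ m.
  by rewrite natrM -subn1 !natrX natrB ?expn_gt0 // natrX.
have -> : (((2^m)^k)%:R : R) = q ^+ m by rewrite -expnM mulnC expnM !natrX.
have ln2 : ln (2 : R) <= 1.
  rewrite -ler_expR lnK ?posrE //; have := expR_ge1Dx (1:R); lra.
have ln2p : 0 <= ln (2 : R) by apply: ln_ge0; lra.
rewrite /powR (_ : (2 : R) == 0 = false); last by apply/negbTE; lra.
have kn0 : (k%:R : R) != 0 by rewrite pnatr_eq0 -lt0n.
have qn0 : q != 0 by rewrite gt_eqF.
have -> : (1 - m%:R / (k%:R * q)) * k%:R * ln 2 = k%:R * ln 2 + m%:R * (-(ln 2 / q)).
  by field; apply/andP.
rewrite expRD !expRM_natl lnK ?posrE // -/q -mulrA ler_pM2l // -expr_div_n.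
apply: lerXn2r.
- by rewrite nnegrE divr_ge0 ?subr_ge0 // ltW.
- by rewrite nnegrE expR_ge0.
have := expR_ge1Dx (-(ln 2 / q)).
have h : ln 2 / q <= q^-1.
  by rewrite -[leRHS]mul1r ler_wpM2r // invr_ge0 ltW.
have -> : (q - 1) / q = 1 - q^-1 by rewrite mulrBl divff // mul1r.
lra.
Qed.

Theorem proposition1 (R : realType) (m k : nat) (hm : (0 < m)%N) (hk : (0 < k)%N) :
  let beta : R := m%:R / (k%:R * 2 ^+ k) in
  1 - powR 2 ((1 - beta) * k%:R) <= prob_nondeg R m k.
Proof.
change (1 - powR 2 ((1 - m%:R / (k%:R * 2 ^+ k)) * k%:R) <= prob_nondeg R m k); rewrite /prob_nondeg.
have hN : #|{: config m k}| = ((2^m)^k)%N by rewrite card_ffun card_ffun card_bool !card_ord.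
have hG : (#|[set mu : config m k | allpat mu]| <= #|[set mu : config m k | Defs.nondegenerate mu]|)%N.
  apply: subset_leq_card; apply/fintype.subsetP => mu; rewrite !inE; exact: allpat_nondeg.
have hC : (#|[set mu : config m k | allpat mu]| + #|[set mu : config m k | ~~ allpat mu]| = (2^m)^k)%N.
  rewrite -hN -(cardsC [set mu : config m k | allpat mu]); congr (_ + _).
  by apply: eq_card => mu; rewrite !inE.
have hB := count_bad m k.
have hRB := @real_bound R m k hk.
rewrite hN.
have Np : (0 < (2^m)^k)%N by rewrite !expn_gt0.
move: hC hRB hB hG Np.
move: ((2^m)^k)%N (2 ^ k * (2 ^ k).-1 ^ m)%N => N b.
move: (#|[set mu : config m k | Defs.nondegenerate mu]|) => G.
move: #|[set mu : config m k | allpat mu]| #|[set mu : config m k | ~~ allpat mu]| => A B.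
move: (2 `^ _) => P.
move=> hC hRB hB hG Np.
have Npos : (0 : R) < N%:R by rewrite ltr0n.
have hNG : (N%:R : R) <= G%:R + b%:R.
  by rewrite -natrD ler_nat -hC leq_add.
have : 1 - b%:R / N%:R <= (G%:R / N%:R : R).
  rewrite -{1}(divff (lt0r_neq0 Npos)) -mulrBl ler_pM2r ?invr_gt0 //; lra.
lra.
Qed.
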